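(* Let $m\ge1$ be an integer, $0<T<\infty$, and let $u$ be a smooth finite-energy solution of $u_t=u_{rr}+\frac1ru_r-\frac{m^2}{2r^2}\sin(2u)$ on $(0,T)$. Then no energy concentration at spatial infinity is possible: $$\lim_{R\to\infty}\limsup_{t\to T}E(u(t);B_R^c)=0,$$ where $E(u;B_R^c)=\frac12\int_R^\infty\big(u_r^2+\frac{m^2\sin^2u}{r^2}\big)r\,dr$.
   Context: $u(t,r)$ is the angle function of an $m$-corotational map $\mathbb R^2\to\mathbb S^2$ evolving by the harmonic map heat flow; finite energy means $E(u)=\frac12\int_0^\infty(u_r^2+\frac{m^2\sin^2u}{r^2})r\,dr<\infty$. *)

(* Defs.v *)
From Stdlib Require Import Reals List.
From Coquelicot Require Import Coquelicot.
Open Scope R_scope.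

(* Iterated partial derivatives of a function of (t, r):
   [true] = derivative in t, [false] = derivative in r; the list is read
   outermost-first. *)
Fixpoint pderiv (l : list bool) (f : R -> R -> R) : R -> R -> R :=
  match l with
  | nil => f
  | true :: l' => fun t r => Derive (fun s => pderiv l' f s r) t
  | false :: l' => fun t r => Derive (fun s => pderiv l' f t s) r
  end.

Definition smooth_on (D : R -> R -> Prop) (f : R -> R -> R) : Prop :=
  forall (l : list bool) (t r : R), D t r ->
    continuous (fun p : R * R => pderiv l f (fst p) (snd p)) (t, r) /\
    ex_derive (fun s => pderiv l f s r) t /\
    ex_derive (fun s => pderiv l f t s) r.

(* energy density (including the r dr measure) of the angle function v *)
Definition energy_density (m : nat) (v : R -> R) (r : R) : R :=
  / 2 * ((Derive v r) ^ 2 + (INR m) ^ 2 * (sin (v r)) ^ 2 / r ^ 2) * r.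

Definition has_energy (m : nat) (v : R -> R) (e : R) : Prop :=
  is_RInt_gen (energy_density m v) (at_right 0) (Rbar_locally p_infty) e.

Definition energy_out (m : nat) (v : R -> R) (Rad : R) : R :=
  RInt_gen (energy_density m v) (at_point Rad) (Rbar_locally p_infty).

Definition hmhf_solution (m : nat) (T : R) (u : R -> R -> R) : Prop :=
  forall t r, 0 < t < T -> 0 < r ->
    pderiv (true :: nil) u t r =
      pderiv (false :: false :: nil) u t r
      + / r * pderiv (false :: nil) u t r
      - (INR m) ^ 2 / (2 * r ^ 2) * sin (2 * u t r).

(* Main.v *)
Require Import Defs.
From Stdlib Require Import Reals List Lra Psatz.
From Coquelicot Require Import Coquelicot.
Open Scope R_scope.

Lemma c2d_r (F : R -> R -> R) t r :
  continuity_2d_pt F t r -> continuous (fun v => F t v) r.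
Proof.
  intro H. apply continuity_2d_pt_filterlim in H.
  apply (continuous_comp_2 (fun _ : R => t) (fun v : R => v) F).
  - apply continuous_const.
  - apply continuous_id.
  - exact H.
Qed.

Lemma gen_dt (f1 f2 : R -> R) (K a b t r : R) : ex_derive f1 t -> ex_derive f2 t -> r <> 0 ->
 is_derive (fun s => (a*r+b)^2 * (/ 2 * ((f1 s) ^ 2 + K * (sin (f2 s)) ^ 2 / r ^ 2) * r)) t
  ((a*r+b)^2 * (/2 * (2 * f1 t * Derive f1 t + K * (2*sin(f2 t)*cos(f2 t)* Derive f2 t) / r^2) * r)).
Proof.
  intros H1 H2 Hr. auto_derive.
  - split; [exact H1| split; [exact H2|exact I]].
  - change (Derive (fun x : R => f1 x) t) with (Derive f1 t). change (Derive (fun x : R => f2 x) t) with (Derive f2 t). simpl. field. exact Hr.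
Qed.

Lemma gen_dr (g1 g2 : R -> R) (a b r : R) : ex_derive g1 r -> ex_derive g2 r ->
 is_derive (fun x => (a*x+b)^2 * x * g1 x * g2 x) r
  (2*(a*r+b)*a*r*g1 r*g2 r + (a*r+b)^2*g1 r*g2 r + (a*r+b)^2*r*Derive g1 r*g2 r
   + (a*r+b)^2*r*g1 r*Derive g2 r).
Proof.
  intros H1 H2. auto_derive.
  - split; [exact H1| split; [exact H2|exact I]].
  - change (Derive (fun x : R => g1 x) r) with (Derive g1 r). change (Derive (fun x : R => g2 x) r) with (Derive g2 r). simpl. ring.
Qed.

Lemma rho_nn m v r : 0 < r -> 0 <= energy_density m v r.
Proof.
  intro Hr. unfold energy_density.
  apply Rmult_le_pos; [|lra]. apply Rmult_le_pos; [lra|].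
  apply Rplus_le_le_0_compat; [apply pow2_ge_0|].
  unfold Rdiv. apply Rmult_le_pos.
  - apply Rmult_le_pos; apply pow2_ge_0.
  - left. apply Rinv_0_lt_compat. apply pow_lt. exact Hr.
Qed.

Section Imp.
Variable f : R -> R.
Hypothesis fex : forall a b, 0 < a -> a <= b -> ex_RInt f a b.
Hypothesis fnn : forall x, 0 < x -> 0 <= f x.

Lemma gen_ev l eps : is_RInt_gen f (at_right 0) (Rbar_locally p_infty) l -> 0 < eps ->
  exists d, 0 < d /\ exists N, forall x y, 0 < x < d -> N < y ->
    exists z, is_RInt f x y z /\ Rabs (z - l) < eps.
Proof.
  intros H He.
  apply (filterlimi_locally (F:=filter_prod (at_right 0) (Rbar_locally p_infty))) with (eps := mkposreal eps He) in H.
  destruct H as [Q Rr HQ HR HP].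
  destruct HQ as [d Hd]. destruct HR as [N HN].
  exists d. split; [apply cond_pos|]. exists N. intros x y Hx Hy.
  destruct (HP x y) as [z [Hz Bz]].
  - apply Hd; [|lra]. unfold ball; simpl. unfold AbsRing_ball, abs, minus, plus, opp; simpl.
    rewrite Rabs_right; lra.
  - apply HN; lra.
  - exists z. split; [exact Hz|]. exact Bz.
Qed.

Lemma mono a b c : 0 < a -> a <= b -> b <= c -> RInt f a b <= RInt f a c.
Proof.
  intros Ha Hab Hbc.
  rewrite <- (RInt_Chasles (V:=R_CompleteNormedModule) f a b c) by (apply fex; lra).
  simpl. unfold plus; simpl.
  assert (0 <= RInt f b c) by (apply RInt_ge_0; [lra| apply fex; lra| intros; apply fnn; lra]).
  lra.
Qed.

Lemma mono_l a b c : 0 < a -> a <= b -> b <= c -> RInt f b c <= RInt f a c.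
Proof.
  intros Ha Hab Hbc.
  rewrite <- (RInt_Chasles (V:=R_CompleteNormedModule) f a b c) by (apply fex; lra).
  simpl. unfold plus; simpl.
  assert (0 <= RInt f a b) by (apply RInt_ge_0; [lra| apply fex; lra| intros; apply fnn; lra]).
  lra.
Qed.

Lemma gen_bound l a b : is_RInt_gen f (at_right 0) (Rbar_locally p_infty) l -> 0 < a -> a <= b ->
  RInt f a b <= l.
Proof.
  intros H Ha Hab. apply le_epsilon. intros eps He.
  destruct (gen_ev l eps H He) as [d [Hd [N HN]]].
  set (x := Rmin a (d/2)). set (y := Rmax b (Rabs N + 1)).
  assert (Hx1 : x <= a) by apply Rmin_l. assert (Hx2 : x <= d/2) by apply Rmin_r.
  assert (Hx3 : 0 < x) by (apply Rmin_glb_lt; lra).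
  assert (Hy1 : b <= y) by apply Rmax_l. assert (Hy2 : Rabs N + 1 <= y) by apply Rmax_r.
  pose proof (Rle_abs N).
  destruct (HN x y) as [z [Hz Bz]]; [lra|lra|].
  apply (is_RInt_unique (V:=R_CompleteNormedModule)) in Hz.
  apply Rabs_def2 in Bz.
  assert (RInt f a b <= RInt f a y) by (apply mono; lra).
  assert (RInt f a y <= RInt f x y) by (apply mono_l; lra).
  lra.
Qed.

Lemma gen_tail l eps : is_RInt_gen f (at_right 0) (Rbar_locally p_infty) l -> 0 < eps ->
  exists N, 0 < N /\ forall r1 r2, N <= r1 -> r1 <= r2 -> RInt f r1 r2 <= eps.
Proof.
  intros H He.
  destruct (gen_ev l (eps/2) H ltac:(lra)) as [d [Hd [N HN]]].
  exists (Rabs N + d + 1). split; [pose proof (Rabs_pos N); lra|].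
  intros r1 r2 H1 H2. pose proof (Rle_abs N). pose proof (Rabs_pos N).
  destruct (HN (d/2) r1) as [z1 [Hz1 B1]]; [lra|lra|].
  destruct (HN (d/2) r2) as [z2 [Hz2 B2]]; [lra|lra|].
  apply (is_RInt_unique (V:=R_CompleteNormedModule)) in Hz1. apply (is_RInt_unique (V:=R_CompleteNormedModule)) in Hz2.
  apply Rabs_def2 in B1. apply Rabs_def2 in B2.
  assert (C := RInt_Chasles (V:=R_CompleteNormedModule) f (d/2) r1 r2
     ltac:(apply fex; lra) ltac:(apply fex; lra)).
  simpl in C. unfold plus in C; simpl in C.
  lra.
Qed.

Lemma out_bound Rad X : 0 < Rad -> (forall B, Rad < B -> RInt f Rad B <= X) ->
  RInt_gen f (at_point Rad) (Rbar_locally p_infty) <= X.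
Proof.
  intros HR HB.
  set (E := fun y => exists B, Rad < B /\ y = RInt f Rad B).
  destruct (completeness E) as [L [HL1 HL2]].
  - exists X. intros y [B [HB1 ->]]. apply HB; exact HB1.
  - exists (RInt f Rad (Rad+1)). exists (Rad+1). split; [lra|reflexivity].
  - assert (HLX : L <= X).
    { apply HL2. intros y [B [HB1 ->]]. apply HB; exact HB1. }
    assert (Hgen : is_RInt_gen f (at_point Rad) (Rbar_locally p_infty) L).
    { apply (filterlimi_locally (F:=filter_prod (at_point Rad) (Rbar_locally p_infty))).
      intros eps.
      assert (Hex : exists B0, Rad < B0 /\ L - eps < RInt f Rad B0).
      { apply Classical_Prop.NNPP. intro Hn.
        assert (L <= L - eps).
        { apply HL2. intros y [B [HB1 ->]].
          apply Rnot_lt_le. intro Hc. apply Hn. exists B. split; assumption. }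
        pose proof (cond_pos eps). lra. }
      destruct Hex as [B0 [HB0 HB0']].
      apply (Filter_prod _ _ _ (fun x => x = Rad) (fun y => B0 < y)).
      - reflexivity.
      - exists B0. auto.
      - intros x y -> Hy. exists (RInt f Rad y). split.
        + apply (RInt_correct (V:=R_CompleteNormedModule)). apply fex; lra.
        + unfold ball; simpl. unfold AbsRing_ball, abs, minus, plus, opp; simpl.
          assert (RInt f Rad B0 <= RInt f Rad y) by (apply mono; lra).
          assert (RInt f Rad y <= L) by (apply HL1; exists y; split; [lra|reflexivity]).
          apply Rabs_def1; lra. }
    rewrite (is_RInt_gen_unique _ _ Hgen). exact HLX.
Qed.

End Imp.

Section S.
Variables (m : nat) (T : R) (u : R -> R -> R).
Hypothesis Hsm : smooth_on (fun t r => 0 < t < T /\ 0 < r) u.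
Hypothesis Hpde : hmhf_solution m T u.

Lemma sm_c l t r : 0 < t < T -> 0 < r -> continuity_2d_pt (pderiv l u) t r.
Proof.
  intros Ht Hr. apply continuity_2d_pt_filterlim.
  exact (proj1 (Hsm l t r (conj Ht Hr))).
Qed.
Lemma sm_dt l t r : 0 < t < T -> 0 < r -> ex_derive (fun s => pderiv l u s r) t.
Proof. intros Ht Hr. exact (proj1 (proj2 (Hsm l t r (conj Ht Hr)))). Qed.
Lemma sm_dr l t r : 0 < t < T -> 0 < r -> ex_derive (fun s => pderiv l u t s) r.
Proof. intros Ht Hr. exact (proj2 (proj2 (Hsm l t r (conj Ht Hr)))). Qed.

Lemma locD (P : R -> R -> Prop) t r : 0 < t < T -> 0 < r ->
  (forall t' r', 0 < t' < T -> 0 < r' -> P t' r') -> locally_2d P t r.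
Proof.
  intros Ht Hr HP.
  assert (Hd : 0 < Rmin (Rmin t (T - t)) r).
  { repeat apply Rmin_glb_lt; lra. }
  exists (mkposreal _ Hd). simpl. intros t' r' H1 H2.
  apply HP.
  - pose proof (Rmin_l (Rmin t (T - t)) r). pose proof (Rmin_l t (T - t)).
    pose proof (Rmin_r t (T - t)).
    apply Rabs_def2 in H1. lra.
  - pose proof (Rmin_r (Rmin t (T - t)) r). apply Rabs_def2 in H2. lra.
Qed.

Lemma schwarz t r : 0 < t < T -> 0 < r ->
  pderiv (true :: false :: nil) u t r = pderiv (false :: true :: nil) u t r.
Proof.
  intros Ht Hr. simpl.
  apply (Schwarz u t r).
  - apply locD; auto. intros t' r' H1 H2. repeat split.
    + exact (sm_dt nil t' r' H1 H2).
    + exact (sm_dr nil t' r' H1 H2).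
    + exact (sm_dt (false::nil) t' r' H1 H2).
    + exact (sm_dr (true::nil) t' r' H1 H2).
  - exact (sm_c (true::false::nil) t r Ht Hr).
  - exact (sm_c (false::true::nil) t r Ht Hr).
Qed.

Ltac c2d Ht Hr :=
  repeat match goal with
  | |- continuity_2d_pt (fun x y => @?f x y + @?g x y) _ _ => apply (continuity_2d_pt_plus f g)
  | |- continuity_2d_pt (fun x y => @?f x y - @?g x y) _ _ => apply (continuity_2d_pt_minus f g)
  | |- continuity_2d_pt (fun x y => @?f x y * @?g x y) _ _ => apply (continuity_2d_pt_mult f g)
  | |- continuity_2d_pt (fun x y => @?f x y / @?g x y) _ _ => unfold Rdiv
  | |- continuity_2d_pt (fun x y => / @?f x y) _ _ => apply (continuity_2d_pt_inv f); [|simpl]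
  | |- continuity_2d_pt (fun x y => (@?f x y) ^ ?n) _ _ =>
       apply (continuity_1d_2d_pt_comp (fun z => z ^ n) f); [apply derivable_continuous_pt; apply derivable_pt_pow|]
  | |- continuity_2d_pt (fun x y => sin (@?f x y)) _ _ =>
       apply (continuity_1d_2d_pt_comp sin f); [apply continuity_sin|]
  | |- continuity_2d_pt (fun x y => cos (@?f x y)) _ _ =>
       apply (continuity_1d_2d_pt_comp cos f); [apply continuity_cos|]
  | |- continuity_2d_pt (fun x y => y) _ _ => apply continuity_2d_pt_id2
  | |- continuity_2d_pt (fun x y => x) _ _ => apply continuity_2d_pt_id1
  | |- continuity_2d_pt (fun x y => ?c) _ _ => apply continuity_2d_pt_const
  | |- continuity_2d_pt _ _ _ =>
       first [ exact (sm_c nil _ _ Ht Hr) | exact (sm_c (false::nil) _ _ Ht Hr)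
             | exact (sm_c (true::nil) _ _ Ht Hr) | exact (sm_c (false::false::nil) _ _ Ht Hr)
             | exact (sm_c (true::false::nil) _ _ Ht Hr) | exact (sm_c (false::true::nil) _ _ Ht Hr) ]
  end; try lra; try nra.

Definition Hf (a b t r : R) : R :=
  (a*r+b)^2 * (/2 * (2 * pderiv (false::nil) u t r * pderiv (true::false::nil) u t r
     + INR m ^2 * (2*sin(u t r)*cos(u t r)* pderiv (true::nil) u t r) / r^2) * r).

Definition Pf (a b t r : R) : R :=
  (a*r+b)^2 * r * pderiv (false::nil) u t r * pderiv (true::nil) u t r.

Definition dPf (a b t r : R) : R :=
  2*(a*r+b)*a*r*pderiv (false::nil) u t r*pderiv (true::nil) u t r
  + (a*r+b)^2*pderiv (false::nil) u t r*pderiv (true::nil) u t r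
  + (a*r+b)^2*r*pderiv (false::false::nil) u t r*pderiv (true::nil) u t r
  + (a*r+b)^2*r*pderiv (false::nil) u t r*pderiv (false::true::nil) u t r.

Lemma dh a b t r : 0 < t < T -> 0 < r ->
  is_derive (fun s => (a*r+b)^2 * energy_density m (u s) r) t (Hf a b t r).
Proof.
  intros Ht Hr. unfold energy_density, Hf.
  apply (gen_dt (fun s => pderiv (false::nil) u s r) (fun s => u s r)).
  - exact (sm_dt (false::nil) t r Ht Hr).
  - exact (sm_dt nil t r Ht Hr).
  - lra.
Qed.

Lemma dP a b t r : 0 < t < T -> 0 < r ->
  is_derive (fun x => Pf a b t x) r (dPf a b t r).
Proof.
  intros Ht Hr. unfold Pf, dPf.
  apply (gen_dr (fun x => pderiv (false::nil) u t x) (fun x => pderiv (true::nil) u t x)).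
  - exact (sm_dr (false::nil) t r Ht Hr).
  - exact (sm_dr (true::nil) t r Ht Hr).
Qed.

Lemma ineq a b t r : 0 < t < T -> 0 < r ->
  Hf a b t r <= dPf a b t r + 2 * a^2 * energy_density m (u t) r.
Proof.
  intros Ht Hr.
  pose proof (Hpde t r Ht Hr) as E. pose proof (schwarz t r Ht Hr) as S.
  unfold Hf, dPf, energy_density. rewrite S.
  change (Derive (u t) r) with (pderiv (false::nil) u t r).
  set (a1 := pderiv (false::nil) u t r) in *.
  set (b1 := pderiv (true::nil) u t r) in *.
  set (c := pderiv (false::false::nil) u t r) in *.
  set (d := pderiv (false::true::nil) u t r) in *.
  change (pderiv nil u t r) with (u t r) in E.
  rewrite sin_2a in E.
  set (S1 := sin (u t r)) in *. set (C1 := cos (u t r)) in *.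
  set (K := INR m ^ 2) in *.
  assert (Ec : c = b1 - / r * a1 + K / (2 * r ^ 2) * (2 * S1 * C1)) by lra.
  rewrite Ec.
  set (p := a*r+b).
  assert (Key : 2 * p * a * r * a1 * b1 + p ^ 2 * a1 * b1 +
     p ^ 2 * r * (b1 - / r * a1 + K / (2 * r ^ 2) * (2 * S1 * C1)) * b1 +
     p ^ 2 * r * a1 * d + 2 * a ^ 2 * (/ 2 * (a1 ^ 2 + K * S1 ^ 2 / r ^ 2) * r)
     - p ^ 2 * (/ 2 * (2 * a1 * d + K * (2 * S1 * C1 * b1) / r ^ 2) * r)
     = r * (p * b1 + a * a1) ^ 2 + a^2 * K * S1^2 / r).
  { field. lra. }
  assert (0 <= r * (p * b1 + a * a1) ^ 2 + a^2 * K * S1^2 / r).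
  { apply Rplus_le_le_0_compat.
    - apply Rmult_le_pos; [lra| apply pow2_ge_0].
    - unfold Rdiv. apply Rmult_le_pos.
      + apply Rmult_le_pos; [apply Rmult_le_pos; [apply pow2_ge_0|] | apply pow2_ge_0].
        unfold K. apply pow2_ge_0.
      + left; apply Rinv_0_lt_compat; lra. }
  lra.
Qed.


Lemma cont_h a b t r : 0 < t < T -> 0 < r ->
  continuity_2d_pt (fun t r => (a*r+b)^2 * energy_density m (u t) r) t r.
Proof. intros Ht Hr. unfold energy_density. c2d Ht Hr. Qed.

Lemma cont_rho t r : 0 < t < T -> 0 < r ->
  continuity_2d_pt (fun t r => energy_density m (u t) r) t r.
Proof. intros Ht Hr. unfold energy_density. c2d Ht Hr. Qed.

Lemma cont_dh a b t r : 0 < t < T -> 0 < r ->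
  continuity_2d_pt (fun t r => Derive (fun z => (a*r+b)^2 * energy_density m (u z) r) t) t r.
Proof.
  intros Ht Hr.
  apply (continuity_2d_pt_ext_loc (Hf a b)).
  - apply locD; auto. intros t' r' H1 H2. symmetry. apply is_derive_unique. apply dh; auto.
  - unfold Hf. c2d Ht Hr.
Qed.

Lemma cont_dP a b t r : 0 < t < T -> 0 < r ->
  continuity_2d_pt (dPf a b) t r.
Proof. intros Ht Hr. unfold dPf. c2d Ht Hr. Qed.

Lemma piece a b r1 r2 t : 0 < r1 < r2 -> 0 < t < T ->
  exists Dv, is_derive (fun s => RInt (fun r => (a*r+b)^2 * energy_density m (u s) r) r1 r2) t Dv
   /\ Dv <= Pf a b t r2 - Pf a b t r1 + 2*a^2 * RInt (fun r => energy_density m (u t) r) r1 r2.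
Proof.
  intros Hr Ht.
  assert (Hmin : Rmin r1 r2 = r1) by (apply Rmin_left; lra).
  assert (Hmax : Rmax r1 r2 = r2) by (apply Rmax_right; lra).
  exists (RInt (fun r => Derive (fun s => (a*r+b)^2 * energy_density m (u s) r) t) r1 r2).
  split.
  - apply (is_derive_RInt_param (fun s r => (a*r+b)^2 * energy_density m (u s) r)).
    + apply (locally_interval _ t 0 T); simpl; try lra.
      intros y H1 H2 x Hx. rewrite Hmin, Hmax in Hx.
      eexists. apply dh; lra.
    + intros x Hx. rewrite Hmin, Hmax in Hx. apply cont_dh; lra.
    + apply (locally_interval _ t 0 T); simpl; try lra.
      intros y H1 H2. apply (ex_RInt_continuous (V:=R_CompleteNormedModule)). intros z Hz. rewrite Hmin, Hmax in Hz.
      apply (c2d_r (fun t r => (a*r+b)^2 * energy_density m (u t) r)). apply cont_h; lra.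
  - assert (HI : is_RInt (fun r => dPf a b t r + 2*a^2 * energy_density m (u t) r) r1 r2
              (Pf a b t r2 - Pf a b t r1 + 2*a^2 * RInt (fun r => energy_density m (u t) r) r1 r2)).
    { apply (is_RInt_plus (fun r => dPf a b t r) (fun r => 2*a^2 * energy_density m (u t) r)).
      - apply (is_RInt_derive (fun x => Pf a b t x)).
        + intros x Hx. rewrite Hmin, Hmax in Hx. apply dP; lra.
        + intros x Hx. rewrite Hmin, Hmax in Hx.
          apply (c2d_r (dPf a b)). apply cont_dP; lra.
      - apply (is_RInt_scal (fun r => energy_density m (u t) r)).
        apply (RInt_correct (V:=R_CompleteNormedModule)). apply (ex_RInt_continuous (V:=R_CompleteNormedModule)). intros z Hz. rewrite Hmin, Hmax in Hz.
        apply (c2d_r (fun t r => energy_density m (u t) r)). apply cont_rho; lra. }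
    rewrite <- (is_RInt_unique _ _ _ _ HI).
    apply RInt_le.
    + lra.
    + apply (ex_RInt_continuous (V:=R_CompleteNormedModule)). intros z Hz. rewrite Hmin, Hmax in Hz.
      apply (c2d_r (fun t r => Derive (fun z => (a*r+b)^2 * energy_density m (u z) r) t)).
      apply cont_dh; lra.
    + eexists; exact HI.
    + intros x Hx. replace (Derive _ t) with (Hf a b t x) by (symmetry; apply is_derive_unique; apply dh; lra).
      apply ineq; lra.
Qed.


Lemma exR a b t r1 r2 : 0 < t < T -> 0 < r1 -> r1 <= r2 ->
  ex_RInt (fun r => (a*r+b)^2 * energy_density m (u t) r) r1 r2.
Proof.
  intros Ht H1 H2. apply (ex_RInt_continuous (V:=R_CompleteNormedModule)).
  intros z Hz. rewrite Rmin_left in Hz by lra. rewrite Rmax_right in Hz by lra.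
  apply (c2d_r (fun t r => (a*r+b)^2 * energy_density m (u t) r)). apply cont_h; lra.
Qed.

Lemma exR0 t r1 r2 : 0 < t < T -> 0 < r1 -> r1 <= r2 ->
  ex_RInt (fun r => energy_density m (u t) r) r1 r2.
Proof.
  intros Ht H1 H2. apply (ex_RInt_continuous (V:=R_CompleteNormedModule)).
  intros z Hz. rewrite Rmin_left in Hz by lra. rewrite Rmax_right in Hz by lra.
  apply (c2d_r (fun t r => energy_density m (u t) r)). apply cont_rho; lra.
Qed.

Definition G (R0 A s : R) : R :=
  RInt (fun r => (/R0*r + -1)^2 * energy_density m (u s) r) R0 (2*R0)
  + RInt (fun r => (0*r + 1)^2 * energy_density m (u s) r) (2*R0) A
  + RInt (fun r => (-/A*r + 2)^2 * energy_density m (u s) r) A (2*A).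

Lemma G_deriv R0 A M s : 0 < R0 -> 2*R0 < A -> 0 < s < T -> 0 <= M ->
  (forall r1 r2, 0 < r1 < r2 -> RInt (fun r => energy_density m (u s) r) r1 r2 <= M) ->
  ex_derive (G R0 A) s /\ Derive (G R0 A) s <= 4 * M / R0^2.
Proof.
  intros HR HA Hs HM HB.
  destruct (piece (/R0) (-1) R0 (2*R0) s ltac:(lra) Hs) as [D1 [E1 B1]].
  destruct (piece 0 1 (2*R0) A s ltac:(lra) Hs) as [D2 [E2 B2]].
  destruct (piece (-/A) 2 A (2*A) s ltac:(lra) Hs) as [D3 [E3 B3]].
  assert (EG : is_derive (G R0 A) s (D1 + D2 + D3)).
  { exact (is_derive_plus _ _ _ _ _ (is_derive_plus _ _ _ _ _ E1 E2) E3). }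
  split; [eexists; exact EG|].
  rewrite (is_derive_unique _ _ _ EG).
  assert (P1 : Pf (/R0) (-1) s R0 = 0).
  { unfold Pf. replace (/R0*R0 + -1) with 0 by (field; lra). ring. }
  assert (P2 : Pf (/R0) (-1) s (2*R0) = Pf 0 1 s (2*R0)).
  { unfold Pf. replace (/R0*(2*R0) + -1) with (0*(2*R0)+1) by (field; lra). ring. }
  assert (P3 : Pf 0 1 s A = Pf (-/A) 2 s A).
  { unfold Pf. replace (-/A*A + 2) with (0*A+1) by (field; lra). ring. }
  assert (P4 : Pf (-/A) 2 s (2*A) = 0).
  { unfold Pf. replace (-/A*(2*A) + 2) with 0 by (field; lra). ring. }
  assert (I1 := HB R0 (2*R0) ltac:(lra)).
  assert (I3 := HB A (2*A) ltac:(lra)).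
  assert (a1 : 2 * (/R0)^2 * RInt (fun r => energy_density m (u s) r) R0 (2*R0) <= 2 * M / R0^2).
  { unfold Rdiv. rewrite <- Rinv_pow by lra.
    assert (0 < /R0^2) by (apply Rinv_0_lt_compat; apply pow_lt; lra). nra. }
  assert (a3 : 2 * (-/A)^2 * RInt (fun r => energy_density m (u s) r) A (2*A) <= 2 * M / R0^2).
  { assert (0 < /A^2) by (apply Rinv_0_lt_compat; apply pow_lt; lra).
    assert (/A^2 <= /R0^2).
    { apply Rinv_le_contravar. apply pow_lt; lra. apply pow_incr. lra. }
    assert (0 <= RInt (fun r => energy_density m (u s) r) A (2*A)).
    { apply RInt_ge_0. lra. apply exR0; lra. intros x Hx; apply rho_nn; lra. }
    replace ((-/A)^2) with (/A^2) by (simpl; field; lra).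
    unfold Rdiv. nra. }
  assert (a2 : 2 * 0^2 * RInt (fun r => energy_density m (u s) r) (2*R0) A = 0) by ring.
  lra.
Qed.


Lemma sq_le1 (p y : R) : 0 <= p <= 1 -> 0 <= y -> p^2 * y <= y.
Proof. intros [H1 H2] H3. simpl. assert (0 <= p*p <= 1) by nra. nra. Qed.

Lemma local_bound R0 A M t0 t : 0 < R0 -> 2*R0 < A -> 0 < t0 < t -> t < T -> 0 <= M ->
  (forall s, 0 < s < T -> forall r1 r2, 0 < r1 < r2 ->
      RInt (fun r => energy_density m (u s) r) r1 r2 <= M) ->
  RInt (fun r => energy_density m (u t) r) (2*R0) A
  <= RInt (fun r => energy_density m (u t0) r) R0 (2*A) + 4*M/R0^2 * (t - t0).
Proof.
  intros HR HA Ht0 HT HM HB.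
  assert (HGd : forall s, 0 < s < T -> ex_derive (G R0 A) s /\ Derive (G R0 A) s <= 4 * M / R0^2).
  { intros s Hs. apply G_deriv; auto. }
  destruct (MVT_gen (G R0 A) t0 t (Derive (G R0 A))) as [c [Hc Ec]].
  - intros x Hx. rewrite Rmin_left in Hx by lra. rewrite Rmax_right in Hx by lra.
    apply Derive_correct. apply HGd; lra.
  - intros x Hx. rewrite Rmin_left in Hx by lra. rewrite Rmax_right in Hx by lra.
    apply continuity_pt_filterlim. apply (ex_derive_continuous (K:=R_AbsRing) (V:=R_NormedModule)). apply HGd; lra.
  - rewrite Rmin_left in Hc by lra. rewrite Rmax_right in Hc by lra.
    assert (Dc : Derive (G R0 A) c <= 4 * M / R0^2) by (apply HGd; lra).
    assert (Step : G R0 A t <= G R0 A t0 + 4 * M / R0^2 * (t - t0)).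
    { assert (Derive (G R0 A) c * (t - t0) <= 4 * M / R0^2 * (t - t0)).
      { apply Rmult_le_compat_r; lra. }
      lra. }
    assert (Low : RInt (fun r => energy_density m (u t) r) (2*R0) A <= G R0 A t).
    { unfold G.
      assert (0 <= RInt (fun r => (/R0*r + -1)^2 * energy_density m (u t) r) R0 (2*R0)).
      { apply RInt_ge_0. lra. apply exR; lra. intros x Hx.
        apply Rmult_le_pos. apply pow2_ge_0. apply rho_nn; lra. }
      assert (0 <= RInt (fun r => (-/A*r + 2)^2 * energy_density m (u t) r) A (2*A)).
      { apply RInt_ge_0. lra. apply exR; lra. intros x Hx.
        apply Rmult_le_pos. apply pow2_ge_0. apply rho_nn; lra. }
      assert (L2 : RInt (fun r => (0*r + 1)^2 * energy_density m (u t) r) (2*R0) A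
                   = RInt (fun r => energy_density m (u t) r) (2*R0) A).
      { apply (RInt_ext (V:=R_CompleteNormedModule)). intros x _. simpl. ring. }
      lra. }
    assert (Up : G R0 A t0 <= RInt (fun r => energy_density m (u t0) r) R0 (2*A)).
    { unfold G.
      assert (Ht0' : 0 < t0 < T) by lra.
      assert (L1 : RInt (fun r => (/R0*r + -1)^2 * energy_density m (u t0) r) R0 (2*R0)
                   <= RInt (fun r => energy_density m (u t0) r) R0 (2*R0)).
      { apply RInt_le. lra. apply exR; lra. apply exR0; lra. intros x Hx.
        apply sq_le1; [|apply rho_nn; lra].
        assert (Hq : /R0 * x * R0 = x) by (field; lra).
        assert (0 < /R0) by (apply Rinv_0_lt_compat; lra). nra. }
      assert (L2 : RInt (fun r => (0*r + 1)^2 * energy_density m (u t0) r) (2*R0) A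
                   = RInt (fun r => energy_density m (u t0) r) (2*R0) A).
      { apply (RInt_ext (V:=R_CompleteNormedModule)). intros x _. simpl. ring. }
      assert (L3 : RInt (fun r => (-/A*r + 2)^2 * energy_density m (u t0) r) A (2*A)
                   <= RInt (fun r => energy_density m (u t0) r) A (2*A)).
      { apply RInt_le. lra. apply exR; lra. apply exR0; lra. intros x Hx.
        apply sq_le1; [|apply rho_nn; lra].
        assert (Hq : /A * x * A = x) by (field; lra).
        assert (0 < /A) by (apply Rinv_0_lt_compat; lra). nra. }
      assert (C1 := RInt_Chasles (V:=R_CompleteNormedModule) (fun r => energy_density m (u t0) r) R0 (2*R0) A
                      (exR0 t0 R0 (2*R0) Ht0' ltac:(lra) ltac:(lra))
                      (exR0 t0 (2*R0) A Ht0' ltac:(lra) ltac:(lra))).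
      assert (C2 := RInt_Chasles (V:=R_CompleteNormedModule) (fun r => energy_density m (u t0) r) R0 A (2*A)
                      (exR0 t0 R0 A Ht0' ltac:(lra) ltac:(lra))
                      (exR0 t0 A (2*A) Ht0' ltac:(lra) ltac:(lra))).
      simpl in C1, C2. unfold plus in C1, C2. simpl in C1, C2.
      lra. }
    lra.
Qed.

End S.

Theorem lemma3p1 (m : nat) (T : R) (u : R -> R -> R) :
  (1 <= m)%nat ->
  0 < T ->
  smooth_on (fun t r => 0 < t < T /\ 0 < r) u ->
  hmhf_solution m T u ->
  (* finite energy: E(u(t)) is finite, uniformly on (0,T) *)
  (exists M : R, forall t, 0 < t < T ->
     exists e, has_energy m (u t) e /\ e <= M) ->
  (* lim_{R -> oo} limsup_{t -> T} E(u(t); B_R^c) = 0 *)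
  forall eps : R, 0 < eps ->
    exists R0 : R, forall Rad : R, R0 <= Rad ->
      exists delta : R, 0 < delta /\
        forall t : R, T - delta < t < T -> energy_out m (u t) Rad <= eps.
Proof.
  intros Hm HT Hsm Hpde [M HM] eps Heps.
  set (t0 := T/2).
  assert (Ht0 : 0 < t0 < T) by (unfold t0; lra).
  assert (FEX : forall s, 0 < s < T -> forall a b, 0 < a -> a <= b ->
            ex_RInt (fun r => energy_density m (u s) r) a b).
  { intros s Hs a b Ha Hab. apply (exR0 m T u Hsm); auto. }
  assert (FNN : forall s x, 0 < x -> 0 <= energy_density m (u s) x).
  { intros s x Hx. apply rho_nn; exact Hx. }
  assert (HBd : forall s, 0 < s < T -> forall r1 r2, 0 < r1 < r2 ->
            RInt (fun r => energy_density m (u s) r) r1 r2 <= M).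
  { intros s Hs r1 r2 Hr. destruct (HM s Hs) as [e [He HeM]].
    assert (RInt (fun r => energy_density m (u s) r) r1 r2 <= e).
    { apply (gen_bound _ (FEX s Hs) (FNN s) e r1 r2 He); lra. }
    lra. }
  assert (HM0 : 0 <= M).
  { assert (0 <= RInt (fun r => energy_density m (u t0) r) 1 2).
    { apply RInt_ge_0. lra. apply FEX; lra. intros; apply FNN; lra. }
    pose proof (HBd t0 Ht0 1 2 ltac:(lra)). lra. }
  destruct (HM t0 Ht0) as [e0 [He0 _]].
  destruct (gen_tail _ (FEX t0 Ht0) e0 (eps/2) He0 ltac:(lra)) as [N [HN HNt]].
  exists (2*N + 2 + 16*M*T/eps).
  intros Rad HRad.
  assert (Hq : 0 <= 16*M*T/eps).
  { unfold Rdiv. apply Rmult_le_pos; [|left; apply Rinv_0_lt_compat; lra]. nra. }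
  set (R1 := Rad/2).
  assert (HR1a : N <= R1) by (unfold R1; lra).
  assert (HR1b : 1 <= R1) by (unfold R1; lra).
  assert (HR1c : 8*M*T/eps <= R1) by (unfold R1; unfold Rdiv in *; lra).
  assert (HRad' : Rad = 2*R1) by (unfold R1; lra).
  exists (T/2). split; [lra|].
  intros t Ht.
  unfold energy_out.
  apply (out_bound _ (FEX t ltac:(lra)) (FNN t)); [lra|].
  intros B HB.
  rewrite HRad' in HB |- *.
  assert (LB := local_bound m T u Hsm Hpde R1 B M t0 t ltac:(lra) HB ltac:(unfold t0 in *; lra) ltac:(lra) HM0 HBd).
  assert (T1 : RInt (fun r => energy_density m (u t0) r) R1 (2*B) <= eps/2).
  { apply HNt; lra. }
  assert (T2 : 4*M/R1^2 * (t - t0) <= eps/2).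
  { set (w := 4*M/R1^2 * (t - t0)).
    assert (Ew : w * R1^2 = 4*M*(t - t0)) by (unfold w; field; lra).
    assert (Ec : 8*M*T/eps * eps = 8*M*T) by (field; lra).
    assert (Htt : 0 <= t - t0 <= T) by (unfold t0 in *; lra).
    assert (4*M*(t-t0) <= 4*M*T) by nra.
    assert (8*M*T <= R1 * eps) by nra.
    assert (R1 <= R1^2) by nra.
    assert (w * R1^2 <= eps/2 * R1^2) by nra.
    assert (0 < R1^2) by nra.
    nra. }
  lra.
Qed.
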